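(* Let $\mathcal{A}$ be a toric line arrangement in $\mathbb{T}^2$ consisting of exactly $3$ lines, with $f_0$ vertices and $f_2$ chambers, and suppose $f_0<f_2<2f_0$. Then $f_2-f_0$ divides $f_0$.
   Context: Let $\mathbb{T}^2=\mathbb{R}^2/\mathbb{Z}^2$ with quotient map $\pi:\mathbb{R}^2\to\mathbb{T}^2$. A toric line is the image $\pi(L)$ of a line $L=\{(x,y)\in\mathbb{R}^2: ax+by=c\}$ with $a,b\in\mathbb{Z}$ coprime and $c\in\mathbb{R}$; it is said to be of type $(a,b)$. A toric line arrangement is a finite set $\mathcal{A}=\{l_1,\dots,l_n\}$ of distinct toric lines which is essential, i.e. not all of its lines are of the same type (not all lines are parallel). The vertices of $\mathcal{A}$ are the points of $\mathbb{T}^2$ lying on at least two lines of $\mathcal{A}$; the chambers are the connected components of $\mathbb{T}^2\setminus\bigcup_i l_i$. We write $f_0$ and $f_2$ for the numbers of vertices and chambers. *)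

(* Defs.v *)
(* real plane R^2, torus T^2 = R^2/Z^2 handled via lifts. *)
From Stdlib Require Export Reals ZArith List.
Open Scope R_scope.

(* A toric line of type (ta,tb): image of {ta x + tb y = tc} in T^2. *)
Record tline := mkTline { ta : Z; tb : Z; tc : R }.

Definition valid_line (l : tline) : Prop := Z.gcd (ta l) (tb l) = 1%Z.

(* p in R^2 lies in pi^{-1}(pi(L)) = L + Z^2 (uses gcd(a,b)=1). *)
Definition on_line (l : tline) (p : R * R) : Prop :=
  exists k : Z, IZR (ta l) * fst p + IZR (tb l) * snd p = tc l + IZR k.

Definition same_tline (l1 l2 : tline) : Prop :=
  forall p, on_line l1 p <-> on_line l2 p.

Definition parallel (l1 l2 : tline) : Prop :=
  (ta l1 = ta l2 /\ tb l1 = tb l2) \/ (ta l1 = (- ta l2)%Z /\ tb l1 = (- tb l2)%Z).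

Definition torus_eq (p q : R * R) : Prop :=
  exists m n : Z, fst p - fst q = IZR m /\ snd p - snd q = IZR n.

Definition toric_arrangement (A : list tline) : Prop :=
  Forall valid_line A /\
  (forall i j, (i < length A)%nat -> (j < length A)%nat -> i <> j ->
     ~ same_tline (nth i A (mkTline 0 0 0)) (nth j A (mkTline 0 0 0))) /\
  (exists l1 l2, In l1 A /\ In l2 A /\ ~ parallel l1 l2).

Definition on_union (A : list tline) (p : R * R) : Prop :=
  exists l, In l A /\ on_line l p.

Definition is_vertex (A : list tline) (p : R * R) : Prop :=
  exists l1 l2, In l1 A /\ In l2 A /\ ~ same_tline l1 l2 /\ on_line l1 p /\ on_line l2 p.

(* p, q (lifts of points of the complement) lie in the same (path) component
   of T^2 minus the lines: a path in R^2 avoiding the preimage of the lines,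
   from p to some lift of q. *)
Definition same_chamber (A : list tline) (p q : R * R) : Prop :=
  ~ on_union A p /\ ~ on_union A q /\
  exists g1 g2 : R -> R,
    continuity g1 /\ continuity g2 /\
    g1 0 = fst p /\ g2 0 = snd p /\ torus_eq (g1 1, g2 1) q /\
    (forall t, 0 <= t <= 1 -> ~ on_union A (g1 t, g2 t)).

Definition num_classes (P : R * R -> Prop) (E : R * R -> R * R -> Prop) (n : nat) : Prop :=
  exists pts : list (R * R),
    length pts = n /\
    (forall x, In x pts -> P x) /\
    (forall i j, (i < n)%nat -> (j < n)%nat -> i <> j ->
       ~ E (nth i pts (0, 0)) (nth j pts (0, 0))) /\
    (forall p, P p -> exists x, In x pts /\ E p x).

Definition num_vertices (A : list tline) (f0 : nat) : Prop :=
  num_classes (is_vertex A) torus_eq f0.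

Definition num_chambers (A : list tline) (f2 : nat) : Prop :=
  num_classes (fun p => ~ on_union A p) (same_chamber A) f2.

(* Main.v *)
Require Import Defs.
From Stdlib Require Import Reals ZArith List Arith.
From Stdlib Require Import Lra Lia Classical ClassicalEpsilon FinFun.
Open Scope R_scope.

Fixpoint pw {X} (E : X -> X -> Prop) (l : list X) : Prop :=
  match l with
  | nil => True
  | x :: l' => (forall y, In y l' -> ~ E x y /\ ~ E y x) /\ pw E l'
  end.

Lemma pw_nth {X} (E : X -> X -> Prop) (l : list X) d :
  pw E l -> forall i j, (i < length l)%nat -> (j < length l)%nat -> i <> j ->
  ~ E (nth i l d) (nth j l d).
Proof.
  induction l as [|x l IH]; simpl; [intros; lia|]. intros [H1 H2] i j Hi Hj Hij.
  destruct i as [|i]; destruct j as [|j]; try lia.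
  - apply H1. apply nth_In. lia.
  - apply H1. apply nth_In. lia.
  - apply IH; auto; lia.
Qed.

Lemma nth_pw {X} (E : X -> X -> Prop) (l : list X) d :
  (forall i j, (i < length l)%nat -> (j < length l)%nat -> i <> j ->
  ~ E (nth i l d) (nth j l d)) -> pw E l.
Proof.
  induction l as [|x l IH]; simpl; intros H; auto.
  split.
  - intros y Hy. destruct (In_nth l y d Hy) as [k [Hk Hky]].
    split.
    + specialize (H 0%nat (S k)). simpl in H. rewrite Hky in H. apply H; lia.
    + specialize (H (S k) 0%nat). simpl in H. rewrite Hky in H. apply H; lia.
  - apply IH. intros i j Hi Hj Hij. apply (H (S i) (S j)); lia.
Qed.

Lemma pw_app {X} (E : X -> X -> Prop) A B :
  pw E A -> pw E B -> (forall x y, In x A -> In y B -> ~ E x y /\ ~ E y x) -> pw E (A ++ B).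
Proof.
  induction A as [|a A IH]; simpl; auto.
  intros [H1 H2] HB Hc. split.
  - intros y Hy. apply in_app_or in Hy. destruct Hy; auto.
  - apply IH; auto.
Qed.

Lemma pw_remove {X} (E : X -> X -> Prop) A x B :
  pw E (A ++ x :: B) -> pw E (A ++ B) /\ (forall z, In z (A ++ B) -> ~ E z x /\ ~ E x z).
Proof.
  induction A as [|a A IH]; simpl.
  - intros [H1 H2]. split; auto. intros z Hz. destruct (H1 z Hz); auto.
  - intros [H1 H2]. destruct (IH H2) as [IH1 IH2]. split.
    + split; auto. intros y Hy. apply H1. apply in_or_app. apply in_app_or in Hy.
      destruct Hy; [left|right;right]; auto.
    + intros z [Hz|Hz].
      * subst. destruct (H1 x) as [Ha Hb]; [apply in_or_app; right; left; auto|]. auto.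
      * auto.
Qed.

Lemma pw_le {X} (E : X -> X -> Prop) (P : X -> Prop)
  (Hst : forall x1 x2 y, P x1 -> P x2 -> E x1 y -> E x2 y -> E x1 x2) :
  forall L2 L1, pw E L1 -> (forall x, In x L1 -> P x) ->
  (forall x, In x L1 -> exists y, In y L2 /\ E x y) -> (length L1 <= length L2)%nat.
Proof.
  induction L2 as [|y L2 IH]; intros L1 Hpw HP Hc.
  - destruct L1 as [|x L1]; simpl; auto.
    destruct (Hc x (or_introl eq_refl)) as [y [[] _]].
  - destruct (classic (exists x, In x L1 /\ E x y)) as [[x [Hx Hxy]]|Hn].
    + destruct (in_split x L1 Hx) as [A [B ->]].
      destruct (pw_remove E A x B Hpw) as [Hpw' Hnr].
      rewrite length_app in *. simpl.
      assert (length (A ++ B) <= length L2)%nat.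
      { apply IH; auto.
        - intros z Hz. apply HP. apply in_or_app. apply in_app_or in Hz. simpl. tauto.
        - intros z Hz.
          assert (Hz' : In z (A ++ x :: B)).
          { apply in_or_app. apply in_app_or in Hz. simpl. tauto. }
          destruct (Hc z Hz') as [y' [[<-|Hy'] Hzy']].
          + exfalso. destruct (Hnr z Hz) as [Hn1 _]. apply Hn1.
            assert (P x) by (apply HP; apply in_or_app; simpl; auto).
            apply (Hst z x y); auto.
          + exists y'; auto. }
      rewrite length_app in H. simpl. lia.
    + simpl. assert (length L1 <= length L2)%nat; [|lia].
      apply IH; auto. intros z Hz. destruct (Hc z Hz) as [y' [[<-|Hy'] Hzy']].
      * exfalso. apply Hn. eauto.
      * eauto.
Qed.

Lemma num_classes_unique (P : R * R -> Prop) (E : R * R -> R * R -> Prop) n m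
  (Hst : forall x1 x2 y, P x1 -> P x2 -> E x1 y -> E x2 y -> E x1 x2) :
  num_classes P E n -> num_classes P E m -> n = m.
Proof.
  intros [l1 [Hl1 [HP1 [Hd1 Hc1]]]] [l2 [Hl2 [HP2 [Hd2 Hc2]]]].
  assert (pw E l1) by (apply (nth_pw E l1 (0,0)); rewrite Hl1; auto).
  assert (pw E l2) by (apply (nth_pw E l2 (0,0)); rewrite Hl2; auto).
  assert (length l1 <= length l2)%nat.
  { apply (pw_le E P Hst); auto. }
  assert (length l2 <= length l1)%nat.
  { apply (pw_le E P Hst); auto. }
  lia.
Qed.

Lemma num_classes_of (P : R * R -> Prop) (E : R * R -> R * R -> Prop) L :
  (forall x, In x L -> P x) -> pw E L -> (forall p, P p -> exists x, In x L /\ E p x) ->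
  num_classes P E (length L).
Proof.
  intros HP Hpw Hc. exists L. repeat split; auto.
  intros i j Hi Hj Hij. apply pw_nth; auto.
Qed.

Lemma num_classes_ext (P P' : R * R -> Prop) (E E' : R * R -> R * R -> Prop) n :
  (forall p, P p <-> P' p) -> (forall p q, E p q <-> E' p q) ->
  num_classes P E n -> num_classes P' E' n.
Proof.
  intros HP HE [l [H1 [H2 [H3 H4]]]]. exists l. repeat split; auto.
  - intros x Hx. apply HP. auto.
  - intros i j Hi Hj Hij HE'. apply (H3 i j Hi Hj Hij). apply HE. auto.
  - intros p Hp. destruct (H4 p (proj2 (HP p) Hp)) as [x [Hx Hpx]]. exists x. split; auto. apply HE; auto.
Qed.

Lemma pw_map {X Y} (E : Y -> Y -> Prop) (f : X -> Y) (L : list X) :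
  NoDup L -> (forall x y, In x L -> In y L -> E (f x) (f y) -> x = y) -> pw E (map f L).
Proof.
  induction L as [|a L IH]; simpl; intros Hnd Hinj; auto.
  inversion Hnd; subst. split.
  - intros y Hy. apply in_map_iff in Hy. destruct Hy as [x [<- Hx]].
    split; intro HE.
    + assert (a = x) by (apply Hinj; auto). subst. auto.
    + assert (x = a) by (apply Hinj; auto). subst. auto.
  - apply IH; auto.
Qed.

Lemma pw_flat {X Y} (R : X -> X -> Prop) (E : Y -> Y -> Prop) (F : X -> list Y) Q :
  pw R Q -> (forall q, In q Q -> pw E (F q)) ->
  (forall q q' x y, In q Q -> In q' Q -> In x (F q) -> In y (F q') -> E x y -> R q q') ->
  pw E (flat_map F Q).
Proof.
  induction Q as [|q Q IH]; simpl; [auto|]. intros [H1 H2] HF Hc.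
  apply pw_app; auto.
  - apply IH; auto. intros. eapply Hc; eauto.
  - intros x y Hx Hy. apply in_flat_map in Hy. destruct Hy as [q' [Hq' Hy]].
    destruct (H1 q' Hq') as [Hn1 Hn2]. split; intro HE.
    + apply Hn1. eapply Hc; eauto.
    + apply Hn2. eapply Hc; eauto.
Qed.

Lemma pw_in_eq {X} (R : X -> X -> Prop) L x y :
  pw R L -> In x L -> In y L -> R x y -> x = y.
Proof.
  induction L as [|a L IH]; simpl; [tauto|].
  intros [H1 H2] [Hx|Hx] [Hy|Hy] HR; subst; auto.
  - exfalso. destruct (H1 y Hy); auto.
  - exfalso. destruct (H1 x Hx); auto.
Qed.

Lemma extract {X} (R : X -> X -> Prop) (P : X -> Prop)
  (Rrefl : forall x, R x x) (Rsym : forall x y, R x y -> R y x) (Rtr : forall x y z, R x y -> R y z -> R x z) B :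
  exists L, (forall x, In x L -> In x B /\ P x) /\ pw R L /\
            (forall x, In x B -> P x -> exists y, In y L /\ R x y).
Proof.
  induction B as [|b B IH].
  - exists nil. simpl. tauto.
  - destruct IH as [L [H1 [H2 H3]]].
    destruct (classic (P b /\ ~ exists y, In y L /\ R b y)) as [[Hb Hn]|Hn].
    + exists (b :: L). split; [|split].
      * intros x [<-|Hx]; simpl; auto. destruct (H1 x Hx); auto.
      * simpl. split; auto. intros y Hy. split; intros HR; apply Hn; eauto.
      * intros x [<-|Hx] HP.
        -- exists b. simpl; auto.
        -- destruct (H3 x Hx HP) as [y [Hy HR]]. exists y. simpl; auto.
    + exists L. split; [|split]; auto.
      * intros x Hx. destruct (H1 x Hx). simpl; auto.
      * intros x [<-|Hx] HP.
        -- destruct (classic (exists y, In y L /\ R b y)) as [Hy|Hy]; auto.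
           exfalso. apply Hn. auto.
        -- auto.
Qed.

Definition isZ (x : R) : Prop := exists k : Z, x = IZR k.
Definition fl (x : R) : Z := (up x - 1)%Z.

Lemma fl_spec x : IZR (fl x) <= x < IZR (fl x) + 1.
Proof. unfold fl. rewrite minus_IZR. destruct (archimed x). lra. Qed.

Lemma up_unique x k : x < IZR k -> IZR k <= x + 1 -> up x = k.
Proof. intros. symmetry. apply tech_up; auto. Qed.

Lemma fl_unique x k : IZR k <= x < IZR k + 1 -> fl x = k.
Proof. intros. unfold fl. rewrite (up_unique x (k+1)). lia. rewrite plus_IZR; lra. rewrite plus_IZR; lra. Qed.

Lemma up_shift x k : up (x + IZR k) = (up x + k)%Z.
Proof. destruct (archimed x). apply up_unique; rewrite plus_IZR; lra. Qed.

Lemma fl_shift x k : fl (x + IZR k) = (fl x + k)%Z.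
Proof. unfold fl. rewrite up_shift. lia. Qed.

Lemma fl_IZR k : fl (IZR k) = k.
Proof. apply fl_unique. lra. Qed.

Lemma IZR_between_false k n : IZR k < IZR n < IZR k + 1 -> False.
Proof. intros [H1 H2]. apply lt_IZR in H1. rewrite <- plus_IZR in H2. apply lt_IZR in H2. lia. Qed.

Lemma notZ_of x k : IZR k < x < IZR k + 1 -> ~ isZ x.
Proof. intros H [n ->]. eapply IZR_between_false; eauto. Qed.

Lemma up_le_iff x n : (up x <= n)%Z <-> x < IZR n.
Proof.
  destruct (archimed x) as [H1 H2]. split; intros H.
  - apply IZR_le in H. lra.
  - destruct (Z_le_gt_dec (up x) n); auto. exfalso.
    assert (n <= up x - 1)%Z by lia. apply IZR_le in H0. rewrite minus_IZR in H0. lra.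
Qed.

Lemma le_mup_iff y n : (n <= - up (- y))%Z <-> IZR n < y.
Proof.
  split; intros H.
  - assert (up (-y) <= - n)%Z by lia. apply up_le_iff in H0. rewrite opp_IZR in H0. lra.
  - assert (up (-y) <= - n)%Z. { apply up_le_iff. rewrite opp_IZR. lra. } lia.
Qed.

Definition Zrange (a b : Z) : list Z :=
  map (fun k => (a + Z.of_nat k)%Z) (seq 0 (Z.to_nat (b - a + 1))).

Lemma In_Zrange a b n : In n (Zrange a b) <-> (a <= n <= b)%Z.
Proof.
  unfold Zrange. rewrite in_map_iff. split.
  - intros [k [<- Hk]]. apply in_seq in Hk. lia.
  - intros H. exists (Z.to_nat (n - a)). split; [lia|]. apply in_seq. lia.
Qed.


Lemma NoDup_Zrange a b : NoDup (Zrange a b).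
Proof.
  unfold Zrange. apply Injective_map_NoDup; [|apply seq_NoDup].
  intros x y H. lia.
Qed.

Lemma length_Zrange a b : length (Zrange a b) = Z.to_nat (b - a + 1).
Proof. unfold Zrange. rewrite length_map, length_seq. auto. Qed.

Definition ints (x y : R) : list Z := Zrange (up x) (- up (- y)).

Lemma In_ints x y n : In n (ints x y) <-> x < IZR n < y.
Proof.
  unfold ints. rewrite In_Zrange. rewrite up_le_iff, le_mup_iff. tauto.
Qed.

Lemma up_notZ z : ~ isZ z -> (up z + up (- z) = 1)%Z.
Proof.
  intros Hz. destruct (fl_spec z) as [H1 H2].
  assert (IZR (fl z) < z) by (destruct H1; auto; exfalso; apply Hz; exists (fl z); auto).
  assert (up (- z) = - fl z)%Z.
  { apply up_unique; rewrite opp_IZR; lra. }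
  unfold fl in *. lia.
Qed.

Lemma up_Z k : up (IZR k) = (k + 1)%Z.
Proof. apply up_unique; rewrite plus_IZR; lra. Qed.

Lemma fl_le_mup x z : x < z -> (up x - 1 <= - up (- z))%Z.
Proof.
  intros H. apply le_mup_iff. destruct (fl_spec x). unfold fl in *. lra.
Qed.

Definition cnt (x y : R) : Z := (- up (- y) - up x + 1)%Z.

Definition tau (z : R) : nat := if excluded_middle_informative (isZ z) then 1%nat else 0%nat.

Lemma cnt_split x z y : x < z < y ->
  Z.to_nat (cnt x y) = (Z.to_nat (cnt x z) + Z.to_nat (cnt z y) + tau z)%nat.
Proof.
  intros [Hxz Hzy]. unfold cnt, tau.
  pose proof (fl_le_mup x z Hxz). pose proof (fl_le_mup z y Hzy).
  destruct (excluded_middle_informative (isZ z)) as [[k ->]|Hz].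
  - rewrite up_Z in *. rewrite <- opp_IZR in *. rewrite up_Z in *. lia.
  - pose proof (up_notZ z Hz). lia.
Qed.

Lemma cnt_self z : Z.to_nat (cnt z z) = 0%nat.
Proof. unfold cnt. destruct (archimed z), (archimed (-z)).
  assert (0 < up z + up (- z))%Z. { apply lt_IZR. rewrite plus_IZR. lra. } lia. Qed.

Lemma cnt_shift x y k : cnt (x + IZR k) (y + IZR k) = cnt x y.
Proof. unfold cnt. rewrite up_shift. replace (- (y + IZR k)) with (- y + IZR (- k)) by (rewrite opp_IZR; ring).
  rewrite up_shift. lia. Qed.

Lemma length_ints x y : length (ints x y) = Z.to_nat (cnt x y).
Proof. unfold ints, cnt. rewrite length_Zrange. f_equal. Qed.

Lemma tau_shift z k : tau (z + IZR k) = tau z.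
Proof.
  unfold tau. destruct (excluded_middle_informative (isZ (z + IZR k))) as [[n Hn]|H1];
  destruct (excluded_middle_informative (isZ z)) as [[m Hm]|H2]; auto; exfalso.
  - apply H2. exists (n - k)%Z. rewrite minus_IZR. lra.
  - apply H1. exists (m + k)%Z. rewrite plus_IZR. lra.
Qed.

Lemma div01 x d : 0 < x < d -> 0 < x / d < 1.
Proof. intros [H1 H2]. split.
  - apply Rdiv_lt_0_compat; lra.
  - apply (Rmult_lt_reg_r d); [lra|]. unfold Rdiv. rewrite Rmult_assoc, Rinv_l by lra. lra.
Qed.

Lemma div01n x d : d < x < 0 -> 0 < x / d < 1.
Proof. intros H. replace (x / d) with ((- x) / (- d)) by (field; lra). apply div01. lra. Qed.

Lemma cnt_nonneg x y : x < y -> (0 <= cnt x y)%Z.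
Proof. intros H. pose proof (fl_le_mup x y H). unfold cnt. lia. Qed.

Lemma cnt_split' x z y : x <= z <= y -> x < y -> ((x = z \/ z = y) -> ~ isZ z) ->
  Z.to_nat (cnt x y) = (Z.to_nat (cnt x z) + Z.to_nat (cnt z y) + tau z)%nat.
Proof.
  intros [[H1|H1] [H2|H2]] Hxy Hz.
  - apply cnt_split; auto.
  - rewrite <- H2. rewrite cnt_self. unfold tau. destruct (excluded_middle_informative (isZ z)).
    + exfalso. apply Hz; auto.
    + lia.
  - rewrite H1. rewrite cnt_self. unfold tau. destruct (excluded_middle_informative (isZ z)).
    + exfalso. apply Hz; auto.
    + lia.
  - lra.
Qed.

Lemma count_sq z a b : a * b <= 0 -> a <> b -> ((a = 0 \/ b = 0) -> ~ isZ z) ->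
  Z.to_nat (cnt (Rmin (z + b) (z + a)) (Rmax (z + b) (z + a))) =
  (Z.to_nat (cnt (Rmin z (z + a)) (Rmax z (z + a))) +
   Z.to_nat (cnt (Rmin z (z + b)) (Rmax z (z + b))) + tau z)%nat.
Proof.
  intros Hab Hne Hz.
  assert (Hs : (0 <= a /\ b <= 0) \/ (a <= 0 /\ 0 <= b)).
  { destruct (Rle_lt_dec 0 a); destruct (Rle_lt_dec 0 b); try nra; auto. }
  destruct Hs as [[Ha Hb]|[Ha Hb]].
  - rewrite (Rmin_left (z+b) (z+a)), (Rmax_right (z+b) (z+a)) by lra.
    rewrite (Rmin_left z (z+a)), (Rmax_right z (z+a)) by lra.
    rewrite (Rmin_right z (z+b)), (Rmax_left z (z+b)) by lra.
    rewrite (cnt_split' (z+b) z (z+a)); [lia|lra|lra|].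
    intros [H|H]; apply Hz; lra.
  - rewrite (Rmin_right (z+b) (z+a)), (Rmax_left (z+b) (z+a)) by lra.
    rewrite (Rmin_right z (z+a)), (Rmax_left z (z+a)) by lra.
    rewrite (Rmin_left z (z+b)), (Rmax_right z (z+b)) by lra.
    rewrite (cnt_split' (z+a) z (z+b)); [lia|lra|lra|].
    intros [H|H]; apply Hz; lra.
Qed.

Definition btw (x y : R) : list Z := ints (Rmin x y) (Rmax x y).

Lemma btw_div z a N : In N (btw z (z + a)) -> a <> 0 /\ 0 < (IZR N - z) / a < 1.
Proof.
  unfold btw. rewrite In_ints. intros H.
  destruct (Rtotal_order a 0) as [Ha|[Ha|Ha]].
  - rewrite Rmin_right, Rmax_left in H by lra. split; [lra|]. apply div01n. lra.
  - subst. rewrite Rplus_0_r, Rmin_left, Rmax_left in H by lra. lra.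
  - rewrite Rmin_left, Rmax_right in H by lra. split; [lra|]. apply div01. lra.
Qed.

Lemma btw_of z a N : (0 < a -> z < IZR N < z + a) -> (a < 0 -> z + a < IZR N < z) -> a <> 0 -> In N (btw z (z + a)).
Proof.
  intros H1 H2 Ha. unfold btw. rewrite In_ints.
  destruct (Rtotal_order a 0) as [Ha'|[Ha'|Ha']].
  - rewrite Rmin_right, Rmax_left by lra. auto.
  - lra.
  - rewrite Rmin_left, Rmax_right by lra. auto.
Qed.

Lemma length_btw x y : length (btw x y) = Z.to_nat (cnt (Rmin x y) (Rmax x y)).
Proof. apply length_ints. Qed.

Lemma inner_range a b s r : a * b <= 0 -> a <> b -> 0 < s < 1 -> 0 < r < 1 ->
  Rmin b a < a * s + b * r < Rmax b a.
Proof.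
  intros Hab Hne Hs Hr.
  assert (Hc : (0 <= a /\ b <= 0) \/ (a <= 0 /\ 0 <= b)).
  { destruct (Rle_lt_dec 0 a); destruct (Rle_lt_dec 0 b); try nra; auto. }
  destruct Hc as [[Ha Hb]|[Ha Hb]].
  - rewrite Rmin_left, Rmax_right by lra.
    destruct (Req_dec a 0); destruct (Req_dec b 0); try lra; split; nra.
  - rewrite Rmin_right, Rmax_left by lra.
    destruct (Req_dec a 0); destruct (Req_dec b 0); try lra; split; nra.
Qed.

Lemma fl_mono x y : x <= y -> (fl x <= fl y)%Z.
Proof. intros H. destruct (fl_spec x), (fl_spec y).
  assert (IZR (fl x) < IZR (fl y) + 1) by lra. rewrite <- plus_IZR in H4. apply lt_IZR in H4. lia. Qed.

Section Core.
Variables a1 b1 a2 b2 a3 b3 : Z.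
Variables c1 c2 c3 : R.
Definition DD : Z := (a1*b2 - a2*b1)%Z.
Hypothesis HD : DD <> 0%Z.

Definition L1 := mkTline a1 b1 c1.
Definition L2 := mkTline a2 b2 c2.
Definition L3 := mkTline a3 b3 c3.
Definition LL := L1 :: L2 :: L3 :: nil.

Definition f1 (p : R * R) := IZR a1 * fst p + IZR b1 * snd p - c1.
Definition f2 (p : R * R) := IZR a2 * fst p + IZR b2 * snd p - c2.
Definition f3 (p : R * R) := IZR a3 * fst p + IZR b3 * snd p - c3.
Definition d32 : Z := (a3*b2 - b3*a2)%Z.
Definition d13 : Z := (a1*b3 - b1*a3)%Z.
Definition al := IZR d32 / IZR DD.
Definition be := IZR d13 / IZR DD.
Definition ga := al * c1 + be * c2 - c3.

Lemma HDR : IZR DD <> 0.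
Proof. apply not_0_IZR. exact HD. Qed.

Lemma a3_lin : IZR a3 = al * IZR a1 + be * IZR a2.
Proof. pose proof HDR. unfold al, be, d32, d13, DD in *. rewrite !minus_IZR, !mult_IZR in *. field. auto. Qed.
Lemma b3_lin : IZR b3 = al * IZR b1 + be * IZR b2.
Proof. pose proof HDR. unfold al, be, d32, d13, DD in *. rewrite !minus_IZR, !mult_IZR in *. field. auto. Qed.

Lemma f3_lin p : f3 p = al * f1 p + be * f2 p + ga.
Proof. unfold f3, f1, f2, ga. rewrite a3_lin, b3_lin. ring. Qed.

Definition pt (u w : R) : R * R :=
  (((u + c1) * IZR b2 - (w + c2) * IZR b1) / IZR DD,
   (IZR a1 * (w + c2) - IZR a2 * (u + c1)) / IZR DD).

Lemma f1_pt u w : f1 (pt u w) = u.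
Proof. pose proof HDR. unfold f1, pt, DD in *. simpl. rewrite !minus_IZR, !mult_IZR in *. field. auto. Qed.
Lemma f2_pt u w : f2 (pt u w) = w.
Proof. pose proof HDR. unfold f2, pt, DD in *. simpl. rewrite !minus_IZR, !mult_IZR in *. field. auto. Qed.
Lemma f3_pt u w : f3 (pt u w) = al * u + be * w + ga.
Proof. rewrite f3_lin, f1_pt, f2_pt. auto. Qed.
Lemma pt_f p : pt (f1 p) (f2 p) = p.
Proof. pose proof HDR. destruct p as [x y]. unfold f1, f2, pt, DD in *. simpl.
  rewrite !minus_IZR, !mult_IZR in *. f_equal; field; auto. Qed.
Lemma pt_eq p q : f1 p = f1 q -> f2 p = f2 q -> p = q.
Proof. intros. rewrite <- (pt_f p), <- (pt_f q), H, H0. auto. Qed.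

Definition shift (p : R * R) (m n : Z) := (fst p + IZR m, snd p + IZR n).
Lemma f1_shift p m n : f1 (shift p m n) = f1 p + IZR (a1 * m + b1 * n).
Proof. unfold f1, shift. simpl. rewrite plus_IZR, !mult_IZR. ring. Qed.
Lemma f2_shift p m n : f2 (shift p m n) = f2 p + IZR (a2 * m + b2 * n).
Proof. unfold f2, shift. simpl. rewrite plus_IZR, !mult_IZR. ring. Qed.
Lemma f3_shift p m n : f3 (shift p m n) = f3 p + IZR (a3 * m + b3 * n).
Proof. unfold f3, shift. simpl. rewrite plus_IZR, !mult_IZR. ring. Qed.

Lemma teq_shift p q : torus_eq p q -> exists m n, p = shift q m n.
Proof. intros [m [n [H1 H2]]]. exists m, n. destruct p, q. unfold shift. simpl in *. f_equal; lra. Qed.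
Lemma shift_teq q m n : torus_eq (shift q m n) q.
Proof. exists m, n. unfold shift. simpl. split; ring. Qed.

Lemma on1 p : on_line L1 p <-> isZ (f1 p).
Proof. unfold on_line, isZ, f1, L1. simpl. split; intros [k Hk]; exists k; lra. Qed.
Lemma on2 p : on_line L2 p <-> isZ (f2 p).
Proof. unfold on_line, isZ, f2, L2. simpl. split; intros [k Hk]; exists k; lra. Qed.
Lemma on3 p : on_line L3 p <-> isZ (f3 p).
Proof. unfold on_line, isZ, f3, L3. simpl. split; intros [k Hk]; exists k; lra. Qed.

Lemma onU p : on_union LL p <-> isZ (f1 p) \/ isZ (f2 p) \/ isZ (f3 p).
Proof.
  unfold on_union, LL. rewrite <- on1, <- on2, <- on3. split.
  - intros [l [Hl Hp]]. simpl in Hl. destruct Hl as [<-|[<-|[<-|[]]]]; tauto.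
  - intros [H|[H|H]]; eexists; split; eauto; simpl; tauto.
Qed.

Definition Mequiv (q q' : Z * Z) : Prop :=
  exists m n, (fst q - fst q' = a1 * m + b1 * n)%Z /\ (snd q - snd q' = a2 * m + b2 * n)%Z.

Lemma path_fl (h : R -> R) : continuity h -> (forall t, 0 <= t <= 1 -> ~ isZ (h t)) ->
  fl (h 0) = fl (h 1).
Proof.
  intros Hc Hn. symmetry. apply fl_unique. set (k := fl (h 0)).
  destruct (fl_spec (h 0)) as [H1 H2]. fold k in H1, H2.
  assert (H0 : IZR k < h 0).
  { destruct H1; auto. exfalso. apply (Hn 0); [lra|]. exists k; auto. }
  split.
  - destruct (Rle_lt_dec (IZR k) (h 1)) as [|Hlt]; auto. exfalso.
    destruct (IVT (fun t => IZR k - h t) 0 1) as [t [Ht Hz]]; [reg|lra|lra|lra|].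
    apply (Hn t Ht). exists k. lra.
  - destruct (Rlt_le_dec (h 1) (IZR k + 1)) as [|Hle]; auto. exfalso.
    destruct Hle as [Hlt|Heq].
    + destruct (IVT (fun t => h t - (IZR k + 1)) 0 1) as [t [Ht Hz]]; [reg|lra|lra|lra|].
      apply (Hn t Ht). exists (k + 1)%Z. rewrite plus_IZR. lra.
    + apply (Hn 1); [lra|]. exists (k+1)%Z. rewrite plus_IZR. lra.
Qed.

Lemma sep p q : same_chamber LL p q -> exists m n,
  fl (f1 p) = (fl (f1 q) + (a1 * m + b1 * n))%Z /\
  fl (f2 p) = (fl (f2 q) + (a2 * m + b2 * n))%Z /\
  fl (f3 p) = (fl (f3 q) + (a3 * m + b3 * n))%Z.
Proof.
  intros [Hp [Hq [g1 [g2 [Hc1 [Hc2 [H01 [H02 [Ht Hav]]]]]]]]].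
  destruct (teq_shift _ _ Ht) as [m [n Hmn]]. exists m, n.
  assert (Hg : forall f : R * R -> R, (forall p, f p = (fun x y => x) 0 0 + f p) -> True) by auto.
  assert (Hn : forall t, 0 <= t <= 1 -> ~ isZ (f1 (g1 t, g2 t)) /\ ~ isZ (f2 (g1 t, g2 t)) /\ ~ isZ (f3 (g1 t, g2 t))).
  { intros t Ht'. specialize (Hav t Ht'). rewrite onU in Hav. tauto. }
  assert (E0 : p = (g1 0, g2 0)) by (destruct p; simpl in *; subst; auto).
  repeat split.
  - rewrite <- fl_shift, <- f1_shift, <- Hmn, E0.
    apply (path_fl (fun t => f1 (g1 t, g2 t))); [unfold f1; simpl; reg|].
    intros t Ht'. apply Hn; auto.
  - rewrite <- fl_shift, <- f2_shift, <- Hmn, E0.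
    apply (path_fl (fun t => f2 (g1 t, g2 t))); [unfold f2; simpl; reg|].
    intros t Ht'. apply Hn; auto.
  - rewrite <- fl_shift, <- f3_shift, <- Hmn, E0.
    apply (path_fl (fun t => f3 (g1 t, g2 t))); [unfold f3; simpl; reg|].
    intros t Ht'. apply Hn; auto.
Qed.

Lemma fl_strict x : ~ isZ x -> IZR (fl x) < x < IZR (fl x) + 1.
Proof. intros H. destruct (fl_spec x) as [[H1|H1] H2]; split; auto. exfalso. apply H. exists (fl x). auto. Qed.

Lemma seg_notZ x y t : ~ isZ x -> ~ isZ y -> fl x = fl y -> 0 <= t <= 1 -> ~ isZ (x + t * (y - x)).
Proof.
  intros Hx Hy Hf Ht. apply (notZ_of _ (fl x)).
  destruct (fl_strict x Hx). destruct (fl_strict y Hy). rewrite <- Hf in *.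
  set (k := IZR (fl x)) in *.
  assert (0 <= (1 - t) * (x - k)) by (apply Rmult_le_pos; lra).
  assert (0 <= t * (y - k)) by (apply Rmult_le_pos; lra).
  assert (0 <= (1 - t) * (k + 1 - x)) by (apply Rmult_le_pos; lra).
  assert (0 <= t * (k + 1 - y)) by (apply Rmult_le_pos; lra).
  destruct (Req_dec t 0); [subst; lra|].
  assert (0 < t * (y - k)) by (apply Rmult_lt_0_compat; lra).
  assert (0 < t * (k + 1 - y)) by (apply Rmult_lt_0_compat; lra).
  split; nra.
Qed.

Lemma conn p q m n : ~ on_union LL p -> ~ on_union LL q ->
  fl (f1 p) = (fl (f1 q) + (a1 * m + b1 * n))%Z ->
  fl (f2 p) = (fl (f2 q) + (a2 * m + b2 * n))%Z ->
  fl (f3 p) = (fl (f3 q) + (a3 * m + b3 * n))%Z -> same_chamber LL p q.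
Proof.
  intros Hp Hq E1 E2 E3. set (q' := shift q m n).
  rewrite <- fl_shift, <- f1_shift in E1. rewrite <- fl_shift, <- f2_shift in E2.
  rewrite <- fl_shift, <- f3_shift in E3. fold q' in E1, E2, E3.
  assert (Hq' : ~ on_union LL q').
  { rewrite onU in *. unfold q'. rewrite f1_shift, f2_shift, f3_shift.
    intros [[k Hk]|[[k Hk]|[k Hk]]]; apply Hq.
    - left. exists (k - (a1*m+b1*n))%Z. rewrite minus_IZR. lra.
    - right; left. exists (k - (a2*m+b2*n))%Z. rewrite minus_IZR. lra.
    - right; right. exists (k - (a3*m+b3*n))%Z. rewrite minus_IZR. lra. }
  split; [auto|split; [auto|]].
  rewrite onU in Hp, Hq'.
  exists (fun t => fst p + t * (fst q' - fst p)), (fun t => snd p + t * (snd q' - snd p)).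
  split; [reg|]. split; [reg|]. split; [ring|]. split; [ring|]. split.
  - replace (fst p + 1 * (fst q' - fst p), snd p + 1 * (snd q' - snd p)) with q'.
    + apply shift_teq.
    + destruct q'; simpl; f_equal; ring.
  - intros t Ht. rewrite onU.
    set (g := (fst p + t * (fst q' - fst p), snd p + t * (snd q' - snd p))).
    assert (F1 : f1 g = f1 p + t * (f1 q' - f1 p)) by (unfold g, f1; simpl; ring).
    assert (F2 : f2 g = f2 p + t * (f2 q' - f2 p)) by (unfold g, f2; simpl; ring).
    assert (F3 : f3 g = f3 p + t * (f3 q' - f3 p)) by (unfold g, f3; simpl; ring).
    rewrite F1, F2, F3.
    intros [H|[H|H]]; revert H; apply seg_notZ; tauto.
Qed.


Hypothesis Hprod : (d32 * d13 <= 0)%Z.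
Hypothesis Hne3 : ~ (a3 = 0%Z /\ b3 = 0%Z).
Hypothesis H13 : d13 = 0%Z -> forall p, isZ (f1 p) -> isZ (f3 p) -> False.
Hypothesis H23 : d32 = 0%Z -> forall p, isZ (f2 p) -> isZ (f3 p) -> False.
Hypothesis Hs12 : ~ same_tline L1 L2.
Hypothesis Hs13 : ~ same_tline L1 L3.
Hypothesis Hs23 : ~ same_tline L2 L3.

Lemma albe_le : al * be <= 0.
Proof.
  pose proof HDR. unfold al, be.
  replace (IZR d32 / IZR DD * (IZR d13 / IZR DD)) with (IZR (d32 * d13) / (IZR DD * IZR DD))
    by (rewrite mult_IZR; field; auto).
  assert (0 < / (IZR DD * IZR DD)) by (apply Rinv_0_lt_compat; nra).
  assert (IZR (d32 * d13) <= 0) by (apply IZR_le in Hprod; auto).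
  unfold Rdiv. nra.
Qed.

Lemma albe_ne : al <> be.
Proof.
  intros He. pose proof HDR. assert (d32 = d13).
  { apply eq_IZR. unfold al, be in He. apply (Rmult_eq_reg_r (/ IZR DD)); auto.
    apply Rinv_neq_0_compat; auto. }
  assert (d32 = 0%Z) by nia. apply Hne3.
  assert (a3 * DD = a1 * d32 + a2 * d13)%Z by (unfold DD, d32, d13; ring).
  assert (b3 * DD = b1 * d32 + b2 * d13)%Z by (unfold DD, d32, d13; ring).
  split; nia.
Qed.

Lemma al0 : al = 0 -> d32 = 0%Z.
Proof. pose proof HDR. unfold al. intros H0. apply eq_IZR.
  apply (Rmult_eq_reg_r (/ IZR DD)); [|apply Rinv_neq_0_compat; auto]. unfold Rdiv in H0. lra. Qed.
Lemma be0 : be = 0 -> d13 = 0%Z.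
Proof. pose proof HDR. unfold be. intros H0. apply eq_IZR.
  apply (Rmult_eq_reg_r (/ IZR DD)); [|apply Rinv_neq_0_compat; auto]. unfold Rdiv in H0. lra. Qed.

Definition z0 (q : Z * Z) := al * IZR (fst q) + be * IZR (snd q) + ga.

Lemma f3_corner q : f3 (pt (IZR (fst q)) (IZR (snd q))) = z0 q.
Proof. rewrite f3_pt. auto. Qed.

Lemma degen q : (al = 0 \/ be = 0) -> ~ isZ (z0 q).
Proof.
  intros [H|H] Hz; rewrite <- f3_corner in Hz.
  - apply (H23 (al0 H) (pt (IZR (fst q)) (IZR (snd q)))); auto. rewrite f2_pt. exists (snd q); auto.
  - apply (H13 (be0 H) (pt (IZR (fst q)) (IZR (snd q)))); auto. rewrite f1_pt. exists (fst q); auto.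
Qed.

Definition z1 q := z0 q + be.
Definition z2 q := z0 q + al.
Definition lo q := Rmin (z1 q) (z2 q).
Definition hi q := Rmax (z1 q) (z2 q).
Definition chlab q := Zrange (fl (lo q)) (- up (- hi q)).
Definition zeta q (n : Z) := (Rmax (lo q) (IZR n) + Rmin (hi q) (IZR n + 1)) / 2.
Definition sv q n := (zeta q n - z1 q) / (al - be).
Definition chrep q n := pt (IZR (fst q) + sv q n) (IZR (snd q) + 1 - sv q n).

Lemma lo_hi q : lo q < hi q.
Proof. pose proof albe_ne. unfold lo, hi, z1, z2, Rmin, Rmax.
  destruct (Rle_dec (z0 q + be) (z0 q + al)); lra. Qed.

Lemma zeta_prop q n : In n (chlab q) ->
  lo q < zeta q n < hi q /\ IZR n < zeta q n < IZR n + 1.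
Proof.
  unfold chlab. rewrite In_Zrange. intros [Hn1 Hn2].
  apply le_mup_iff in Hn2. pose proof (lo_hi q).
  destruct (fl_spec (lo q)). apply IZR_le in Hn1.
  unfold zeta, Rmax, Rmin.
  destruct (Rle_dec (lo q) (IZR n)); destruct (Rle_dec (hi q) (IZR n + 1)); lra.
Qed.

Lemma sv_prop q n : In n (chlab q) -> 0 < sv q n < 1.
Proof.
  intros Hn. destruct (zeta_prop q n Hn) as [[H1 H2] _]. unfold sv.
  revert H1 H2. unfold lo, hi, z1, z2, Rmin, Rmax. pose proof albe_ne.
  destruct (Rle_dec (z0 q + be) (z0 q + al)); intros.
  - apply div01. lra.
  - apply div01n. lra.
Qed.

Lemma chrep_f1 q n : f1 (chrep q n) = IZR (fst q) + sv q n.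
Proof. unfold chrep. rewrite f1_pt. auto. Qed.
Lemma chrep_f2 q n : f2 (chrep q n) = IZR (snd q) + 1 - sv q n.
Proof. unfold chrep. rewrite f2_pt. auto. Qed.
Lemma chrep_f3 q n : f3 (chrep q n) = zeta q n.
Proof. pose proof albe_ne. unfold chrep. rewrite f3_pt. unfold sv, z1, z0.
  set (Z := zeta q n). assert (al - be <> 0) by lra. field. auto. Qed.

Lemma chrep_fl q n : In n (chlab q) ->
  fl (f1 (chrep q n)) = fst q /\ fl (f2 (chrep q n)) = snd q /\ fl (f3 (chrep q n)) = n.
Proof.
  intros Hn. pose proof (sv_prop q n Hn). destruct (zeta_prop q n Hn) as [_ Hz].
  rewrite chrep_f1, chrep_f2, chrep_f3. repeat split; apply fl_unique; lra.
Qed.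

Lemma chrep_off q n : In n (chlab q) -> ~ on_union LL (chrep q n).
Proof.
  intros Hn. pose proof (sv_prop q n Hn) as Hs. destruct (zeta_prop q n Hn) as [_ Hz].
  rewrite onU, chrep_f1, chrep_f2, chrep_f3. intros [H|[H|H]].
  - apply (notZ_of _ (fst q)) in H; auto. lra.
  - apply (notZ_of _ (snd q)) in H; auto. lra.
  - apply (notZ_of _ n) in H; auto.
Qed.

Definition vlab q : list (Z * Z) :=
  (0%Z, 0%Z) :: map (pair 1%Z) (btw (z0 q) (z0 q + al)) ++ map (pair 2%Z) (btw (z0 q) (z0 q + be)).
Definition vrep q (l : Z * Z) : R * R :=
  if Z.eqb (fst l) 0 then pt (IZR (fst q)) (IZR (snd q))
  else if Z.eqb (fst l) 1 then pt (IZR (fst q) + (IZR (snd l) - z0 q) / al) (IZR (snd q))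
  else pt (IZR (fst q)) (IZR (snd q) + (IZR (snd l) - z0 q) / be).

Lemma length_vlab q : length (vlab q) =
  (1 + Z.to_nat (cnt (Rmin (z0 q) (z0 q + al)) (Rmax (z0 q) (z0 q + al))) +
   Z.to_nat (cnt (Rmin (z0 q) (z0 q + be)) (Rmax (z0 q) (z0 q + be))))%nat.
Proof. unfold vlab. simpl. rewrite length_app, !length_map, !length_btw. lia. Qed.

Lemma length_chlab q : length (chlab q) = (length (vlab q) + tau (z0 q))%nat.
Proof.
  rewrite length_vlab. unfold chlab. rewrite length_Zrange.
  pose proof (cnt_nonneg _ _ (lo_hi q)).
  assert (E : (- up (- hi q) - fl (lo q) + 1 = cnt (lo q) (hi q) + 1)%Z) by (unfold cnt, fl; lia).
  rewrite E. rewrite Z2Nat.inj_add by lia.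
  unfold lo, hi, z1, z2. rewrite count_sq; [simpl; lia | apply albe_le | apply albe_ne | apply degen].
Qed.


Lemma shift3 m n : IZR (a3*m+b3*n) = al * IZR (a1*m+b1*n) + be * IZR (a2*m+b2*n).
Proof. rewrite !plus_IZR, !mult_IZR, a3_lin, b3_lin. ring. Qed.

Lemma teq_f x x' : torus_eq x x' -> exists m n,
  f1 x = f1 x' + IZR (a1*m+b1*n) /\ f2 x = f2 x' + IZR (a2*m+b2*n) /\ f3 x = f3 x' + IZR (a3*m+b3*n).
Proof. intros H. destruct (teq_shift _ _ H) as [m [n ->]]. exists m, n.
  rewrite f1_shift, f2_shift, f3_shift. auto. Qed.

Lemma teq_sym p q : torus_eq p q -> torus_eq q p.
Proof. intros [m [n [H1 H2]]]. exists (-m)%Z, (-n)%Z. rewrite !opp_IZR. lra. Qed.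
Lemma teq_trans p q r : torus_eq p q -> torus_eq q r -> torus_eq p r.
Proof. intros [m [n [H1 H2]]] [m' [n' [H3 H4]]]. exists (m+m')%Z, (n+n')%Z. rewrite !plus_IZR. lra. Qed.

Lemma in_vlab q l : In l (vlab q) ->
  l = (0%Z,0%Z) \/ (exists N, l = (1%Z, N) /\ In N (btw (z0 q) (z0 q + al))) \/
  (exists N, l = (2%Z, N) /\ In N (btw (z0 q) (z0 q + be))).
Proof.
  unfold vlab. simpl. intros [<-|H]; auto. apply in_app_or in H. destruct H as [H|H];
  apply in_map_iff in H; destruct H as [N [<- HN]]; eauto.
Qed.

Lemma vlab_nodup q : NoDup (vlab q).
Proof.
  unfold vlab. constructor.
  - intros H. apply in_app_or in H. destruct H as [H|H]; apply in_map_iff in H;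
    destruct H as [N [H _]]; inversion H.
  - apply NoDup_app.
    + apply Injective_map_NoDup; [intros x y H; inversion H; auto|apply NoDup_Zrange].
    + apply Injective_map_NoDup; [intros x y H; inversion H; auto|apply NoDup_Zrange].
    + intros x H1 H2. apply in_map_iff in H1, H2. destruct H1 as [N [<- _]]. destruct H2 as [N' [H _]].
      inversion H.
Qed.

Lemma vrep_f q l : In l (vlab q) ->
  (l = (0%Z,0%Z) /\ f1 (vrep q l) = IZR (fst q) /\ f2 (vrep q l) = IZR (snd q)) \/
  (exists N s, l = (1%Z, N) /\ 0 < s < 1 /\ al <> 0 /\ s = (IZR N - z0 q) / al /\
      f1 (vrep q l) = IZR (fst q) + s /\ f2 (vrep q l) = IZR (snd q) /\ f3 (vrep q l) = IZR N) \/
  (exists N s, l = (2%Z, N) /\ 0 < s < 1 /\ be <> 0 /\ s = (IZR N - z0 q) / be /\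
      f1 (vrep q l) = IZR (fst q) /\ f2 (vrep q l) = IZR (snd q) + s /\ f3 (vrep q l) = IZR N).
Proof.
  intros H. destruct (in_vlab q l H) as [->|[[N [-> HN]]|[N [-> HN]]]].
  - left. unfold vrep. simpl. rewrite f1_pt, f2_pt. auto.
  - right; left. destruct (btw_div _ _ _ HN) as [Ha Hs]. exists N, ((IZR N - z0 q) / al).
    unfold vrep. simpl. rewrite f1_pt, f2_pt, f3_pt. repeat split; auto; try lra.
    unfold z0. field. auto.
  - right; right. destruct (btw_div _ _ _ HN) as [Ha Hs]. exists N, ((IZR N - z0 q) / be).
    unfold vrep. simpl. rewrite f1_pt, f2_pt, f3_pt. repeat split; auto; try lra.
    unfold z0. field. auto.
Qed.

Lemma vrep_fl q l : In l (vlab q) -> fl (f1 (vrep q l)) = fst q /\ fl (f2 (vrep q l)) = snd q.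
Proof.
  intros H. destruct (vrep_f q l H) as [[_ [E1 E2]]|[[N [s [_ [Hs [_ [_ [E1 [E2 _]]]]]]]]|[N [s [_ [Hs [_ [_ [E1 [E2 _]]]]]]]]]];
  rewrite E1, E2; split; apply fl_unique; lra.
Qed.

Lemma vrep_vertex q l : In l (vlab q) -> is_vertex LL (vrep q l).
Proof.
  intros H. unfold is_vertex, LL.
  destruct (vrep_f q l H) as [[_ [E1 E2]]|[[N [s [_ [Hs [_ [_ [E1 [E2 E3]]]]]]]]|[N [s [_ [Hs [_ [_ [E1 [E2 E3]]]]]]]]]].
  - exists L1, L2. simpl. repeat split; auto.
    + rewrite on1, E1. exists (fst q); auto.
    + rewrite on2, E2. exists (snd q); auto.
  - exists L2, L3. simpl. repeat split; auto.
    + rewrite on2, E2. exists (snd q); auto.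
    + rewrite on3, E3. exists N; auto.
  - exists L1, L3. simpl. repeat split; auto.
    + rewrite on1, E1. exists (fst q); auto.
    + rewrite on3, E3. exists N; auto.
Qed.

Lemma vrep_inj q l l' : In l (vlab q) -> In l' (vlab q) ->
  f1 (vrep q l) = f1 (vrep q l') -> f2 (vrep q l) = f2 (vrep q l') -> l = l'.
Proof.
  intros H H'.
  destruct (vrep_f q l H) as [[-> [E1 E2]]|[[N [s [-> [Hs [Ha [Hsd [E1 [E2 E3]]]]]]]]|[N [s [-> [Hs [Ha [Hsd [E1 [E2 E3]]]]]]]]]];
  destruct (vrep_f q l' H') as [[-> [E1' E2']]|[[N' [s' [-> [Hs' [Ha' [Hsd' [E1' [E2' E3']]]]]]]]|[N' [s' [-> [Hs' [Ha' [Hsd' [E1' [E2' E3']]]]]]]]]];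
  rewrite ?E1, ?E2, ?E1', ?E2'; intros F1 F2; auto; try lra.
  - assert (Hss : s = s') by lra. rewrite Hsd, Hsd' in Hss.
    assert (IZR N = IZR N') by (apply (Rmult_eq_reg_r (/ al)); [|apply Rinv_neq_0_compat; auto];
      unfold Rdiv in Hss; lra). apply eq_IZR in H0. subst. auto.
  - assert (Hss : s = s') by lra. rewrite Hsd, Hsd' in Hss.
    assert (IZR N = IZR N') by (apply (Rmult_eq_reg_r (/ be)); [|apply Rinv_neq_0_compat; auto];
      unfold Rdiv in Hss; lra). apply eq_IZR in H0. subst. auto.
Qed.

Lemma inLL l p : In l LL -> on_line l p ->
  (l = L1 /\ isZ (f1 p)) \/ (l = L2 /\ isZ (f2 p)) \/ (l = L3 /\ isZ (f3 p)).
Proof.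
  unfold LL. simpl. intros [<-|[<-|[<-|[]]]] H.
  - left. rewrite on1 in H. auto.
  - right; left. rewrite on2 in H. auto.
  - right; right. rewrite on3 in H. auto.
Qed.

Lemma same_refl l : same_tline l l.
Proof. intros p. tauto. Qed.

Lemma vertex_kind p : is_vertex LL p ->
  (isZ (f1 p) /\ isZ (f2 p)) \/ (isZ (f1 p) /\ isZ (f3 p)) \/ (isZ (f2 p) /\ isZ (f3 p)).
Proof.
  intros [l1 [l2 [H1 [H2 [Hn [O1 O2]]]]]].
  destruct (inLL l1 p H1 O1) as [[-> Z1]|[[-> Z1]|[-> Z1]]];
  destruct (inLL l2 p H2 O2) as [[-> Z2]|[[-> Z2]|[-> Z2]]]; auto;
  exfalso; apply Hn; apply same_refl.
Qed.

Lemma reduce (Q : list (Z * Z)) (Hc : forall v, exists q, In q Q /\ Mequiv v q) p (I J : Z) :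
  exists q m n, In q Q /\ f1 (shift p m n) = f1 p + IZR (fst q - I) /\
                f2 (shift p m n) = f2 p + IZR (snd q - J).
Proof.
  destruct (Hc (I, J)) as [q [Hq [m [n [E1 E2]]]]]. simpl in E1, E2.
  exists q, (-m)%Z, (-n)%Z. split; auto. rewrite f1_shift, f2_shift. split; f_equal; f_equal; lia.
Qed.

Lemma isZ_plus x k : isZ x -> isZ (x + IZR k).
Proof. intros [j ->]. exists (j + k)%Z. rewrite plus_IZR. auto. Qed.

Definition VL (Q : list (Z * Z)) := flat_map (fun q => map (vrep q) (vlab q)) Q.
Definition CL (Q : list (Z * Z)) := flat_map (fun q => map (chrep q) (chlab q)) Q.

Lemma vertex_complete Q (Hc : forall v, exists q, In q Q /\ Mequiv v q) p :
  is_vertex LL p -> exists x, In x (VL Q) /\ torus_eq p x.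
Proof.
  intros Hv.
  assert (Hgoal : forall q l m n, In q Q -> In l (vlab q) -> vrep q l = shift p m n ->
            exists x, In x (VL Q) /\ torus_eq p x).
  { intros q l m n Hq Hl Heq. exists (vrep q l). split.
    - unfold VL. apply in_flat_map. exists q. split; auto. apply in_map. auto.
    - rewrite Heq. apply teq_sym. apply shift_teq. }
  destruct (vertex_kind p Hv) as [[[I HI] [J HJ]]|[[[I HI] [K HK]]|[[J HJ] [K HK]]]].
  - destruct (reduce Q Hc p I J) as [q [m [n [Hq [E1 E2]]]]].
    apply (Hgoal q (0%Z, 0%Z) m n Hq); [unfold vlab; simpl; auto|].
    unfold vrep. simpl. rewrite <- (pt_f (shift p m n)). rewrite E1, E2, HI, HJ.
    f_equal; rewrite minus_IZR; ring.
  - destruct (classic (isZ (f2 p))) as [[J HJ]|HnJ].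
    + destruct (reduce Q Hc p I J) as [q [m [n [Hq [E1 E2]]]]].
      apply (Hgoal q (0%Z, 0%Z) m n Hq); [unfold vlab; simpl; auto|].
      unfold vrep. simpl. rewrite <- (pt_f (shift p m n)). rewrite E1, E2, HI, HJ.
      f_equal; rewrite minus_IZR; ring.
    + set (J := fl (f2 p)). destruct (fl_strict _ HnJ) as [Hr1 Hr2]. fold J in Hr1, Hr2.
      destruct (reduce Q Hc p I J) as [q [m [n [Hq [E1 E2]]]]].
      set (p' := shift p m n) in *. set (r := f2 p - IZR J).
      assert (F3 : f3 p' = IZR (K + (a3*m+b3*n))) by (unfold p'; rewrite f3_shift, HK, !plus_IZR; ring).
      assert (F1 : f1 p' = IZR (fst q)) by (rewrite E1, HI, minus_IZR; ring).
      assert (F2 : f2 p' = IZR (snd q) + r) by (rewrite E2, minus_IZR; unfold r; ring).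
      set (N := (K + (a3*m+b3*n))%Z) in *.
      assert (Hbe : be <> 0).
      { intros H0. apply (H13 (be0 H0) p'); [rewrite F1; exists (fst q); auto | rewrite F3; exists N; auto]. }
      assert (EN : IZR N = z0 q + be * r) by (rewrite <- F3, f3_lin, F1, F2; unfold z0; ring).
      apply (Hgoal q (2%Z, N) m n Hq).
      * unfold vlab. right. apply in_or_app. right. apply in_map.
        apply btw_of; auto; intros Hb; rewrite EN; split; unfold r in *; nra.
      * unfold vrep. simpl. fold p'. rewrite <- (pt_f p'). rewrite F1, F2. f_equal.
        rewrite EN. field. auto.
  - destruct (classic (isZ (f1 p))) as [[I HI]|HnI].
    + destruct (reduce Q Hc p I J) as [q [m [n [Hq [E1 E2]]]]].
      apply (Hgoal q (0%Z, 0%Z) m n Hq); [unfold vlab; simpl; auto|].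
      unfold vrep. simpl. rewrite <- (pt_f (shift p m n)). rewrite E1, E2, HI, HJ.
      f_equal; rewrite minus_IZR; ring.
    + set (I := fl (f1 p)). destruct (fl_strict _ HnI) as [Hr1 Hr2]. fold I in Hr1, Hr2.
      destruct (reduce Q Hc p I J) as [q [m [n [Hq [E1 E2]]]]].
      set (p' := shift p m n) in *. set (r := f1 p - IZR I).
      assert (F3 : f3 p' = IZR (K + (a3*m+b3*n))) by (unfold p'; rewrite f3_shift, HK, !plus_IZR; ring).
      assert (F2 : f2 p' = IZR (snd q)) by (rewrite E2, HJ, minus_IZR; ring).
      assert (F1 : f1 p' = IZR (fst q) + r) by (rewrite E1, minus_IZR; unfold r; ring).
      set (N := (K + (a3*m+b3*n))%Z) in *.
      assert (Hal : al <> 0).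
      { intros H0. apply (H23 (al0 H0) p'); [rewrite F2; exists (snd q); auto | rewrite F3; exists N; auto]. }
      assert (EN : IZR N = z0 q + al * r) by (rewrite <- F3, f3_lin, F1, F2; unfold z0; ring).
      apply (Hgoal q (1%Z, N) m n Hq).
      * unfold vlab. right. apply in_or_app. left. apply in_map.
        apply btw_of; auto; intros Hb; rewrite EN; split; unfold r in *; nra.
      * unfold vrep. simpl. fold p'. rewrite <- (pt_f p'). rewrite F1, F2. f_equal.
        rewrite EN. field. auto.
Qed.

Lemma chamber_complete Q (Hc : forall v, exists q, In q Q /\ Mequiv v q) p :
  ~ on_union LL p -> exists x, In x (CL Q) /\ same_chamber LL p x.
Proof.
  intros Hp. pose proof Hp as Hp'. rewrite onU in Hp'.
  set (I := fl (f1 p)). set (J := fl (f2 p)).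
  destruct (fl_strict (f1 p)) as [Hs1 Hs2]; [tauto|]. fold I in Hs1, Hs2.
  destruct (fl_strict (f2 p)) as [Hr1 Hr2]; [tauto|]. fold J in Hr1, Hr2.
  destruct (reduce Q Hc p I J) as [q [m [n [Hq [E1 E2]]]]].
  set (p' := shift p m n) in *. set (s := f1 p - IZR I). set (r := f2 p - IZR J).
  assert (F1 : f1 p' = IZR (fst q) + s) by (rewrite E1, minus_IZR; unfold s; ring).
  assert (F2 : f2 p' = IZR (snd q) + r) by (rewrite E2, minus_IZR; unfold r; ring).
  assert (F3 : f3 p' = z0 q + (al * s + be * r)) by (rewrite f3_lin, F1, F2; unfold z0; ring).
  set (N := fl (f3 p')).
  assert (HR : lo q < f3 p' < hi q).
  { rewrite F3. unfold lo, hi, z1, z2.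
    destruct (inner_range al be s r albe_le albe_ne) as [Ha Hb]; [unfold s; lra|unfold r; lra|].
    revert Ha Hb. unfold Rmin, Rmax. destruct (Rle_dec be al); destruct (Rle_dec (z0 q + be) (z0 q + al)); lra. }
  assert (HN : In N (chlab q)).
  { unfold chlab. apply In_Zrange. split.
    - apply fl_mono. lra.
    - apply le_mup_iff. destruct (fl_spec (f3 p')). unfold N. lra. }
  exists (chrep q N). split.
  - unfold CL. apply in_flat_map. exists q. split; auto. apply in_map. auto.
  - destruct (chrep_fl q N HN) as [G1 [G2 G3]].
    apply (conn p (chrep q N) (-m) (-n)); auto.
    + apply chrep_off; auto.
    + assert (fl (f1 p') = fst q) by (rewrite F1; apply fl_unique; unfold s; lra).
      unfold p' in H. rewrite f1_shift, fl_shift in H. lia.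
    + assert (fl (f2 p') = snd q) by (rewrite F2; apply fl_unique; unfold r; lra).
      unfold p' in H. rewrite f2_shift, fl_shift in H. lia.
    + assert (fl (f3 p') = N) by auto.
      unfold p' in H. rewrite f3_shift, fl_shift in H. lia.
Qed.

Lemma pw_CL Q : pw Mequiv Q -> pw (same_chamber LL) (CL Q).
Proof.
  intros HQ. apply (pw_flat Mequiv); auto.
  - intros q _. apply pw_map; [apply NoDup_Zrange|].
    intros n n' Hn Hn' Hsc. destruct (sep _ _ Hsc) as [m [k [G1 [G2 G3]]]].
    destruct (chrep_fl q n Hn) as [K1 [K2 K3]]. destruct (chrep_fl q n' Hn') as [K1' [K2' K3']].
    assert (Z1 : (a1*m+b1*k = 0)%Z) by lia. assert (Z2 : (a2*m+b2*k = 0)%Z) by lia.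
    assert (Z3 : (a3*m+b3*k = 0)%Z).
    { apply eq_IZR. rewrite shift3, Z1, Z2. ring. }
    lia.
  - intros q q' x y Hq Hq' Hx Hy Hsc. apply in_map_iff in Hx, Hy.
    destruct Hx as [n [<- Hn]]. destruct Hy as [n' [<- Hn']].
    destruct (sep _ _ Hsc) as [m [k [G1 [G2 G3]]]].
    destruct (chrep_fl q n Hn) as [K1 [K2 K3]]. destruct (chrep_fl q' n' Hn') as [K1' [K2' K3']].
    exists m, k. lia.
Qed.

Lemma teq_fl x x' : torus_eq x x' -> exists m n,
  fl (f1 x) = (fl (f1 x') + (a1*m+b1*n))%Z /\ fl (f2 x) = (fl (f2 x') + (a2*m+b2*n))%Z /\
  f1 x = f1 x' + IZR (a1*m+b1*n) /\ f2 x = f2 x' + IZR (a2*m+b2*n).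
Proof. intros H. destruct (teq_f x x' H) as [m [n [E1 [E2 _]]]]. exists m, n.
  rewrite E1, E2, !fl_shift. auto. Qed.

Lemma pw_VL Q : pw Mequiv Q -> pw torus_eq (VL Q).
Proof.
  intros HQ. apply (pw_flat Mequiv); auto.
  - intros q _. apply pw_map; [apply vlab_nodup|].
    intros l l' Hl Hl' Ht. destruct (teq_fl _ _ Ht) as [m [k [G1 [G2 [E1 E2]]]]].
    destruct (vrep_fl q l Hl) as [K1 K2]. destruct (vrep_fl q l' Hl') as [K1' K2'].
    assert (Z1 : (a1*m+b1*k = 0)%Z) by lia. assert (Z2 : (a2*m+b2*k = 0)%Z) by lia.
    rewrite Z1 in E1. rewrite Z2 in E2.
    apply (vrep_inj q); auto; lra.
  - intros q q' x y Hq Hq' Hx Hy Ht. apply in_map_iff in Hx, Hy.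
    destruct Hx as [l [<- Hl]]. destruct Hy as [l' [<- Hl']].
    destruct (teq_fl _ _ Ht) as [m [k [G1 [G2 _]]]].
    destruct (vrep_fl q l Hl) as [K1 K2]. destruct (vrep_fl q' l' Hl') as [K1' K2'].
    exists m, k. lia.
Qed.

Lemma core_count Q f0 f2 : pw Mequiv Q -> (forall v, exists q, In q Q /\ Mequiv v q) ->
  num_vertices LL f0 -> num_chambers LL f2 ->
  f0 = length (VL Q) /\ f2 = length (CL Q).
Proof.
  intros HQ Hc Hv Hch. split.
  - apply (num_classes_unique (is_vertex LL) torus_eq); auto.
    + intros x1 x2 y _ _ H1 H2. apply (teq_trans _ y); auto. apply teq_sym; auto.
    + apply num_classes_of.
      * intros x Hx. unfold VL in Hx. apply in_flat_map in Hx. destruct Hx as [q [_ Hx]].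
        apply in_map_iff in Hx. destruct Hx as [l [<- Hl]]. apply vrep_vertex; auto.
      * apply pw_VL; auto.
      * apply vertex_complete; auto.
  - apply (num_classes_unique (fun p => ~ on_union LL p) (same_chamber LL)); auto.
    + intros x1 x2 y P1 P2 H1 H2. destruct (sep _ _ H1) as [m [n [G1 [G2 G3]]]].
      destruct (sep _ _ H2) as [m' [n' [G1' [G2' G3']]]].
      apply (conn _ _ (m - m') (n - n')); auto; lia.
    + apply num_classes_of.
      * intros x Hx. unfold CL in Hx. apply in_flat_map in Hx. destruct Hx as [q [_ Hx]].
        apply in_map_iff in Hx. destruct Hx as [n [<- Hn]]. apply chrep_off; auto.
      * apply pw_CL; auto.
      * apply chamber_complete; auto.
Qed.

Definition lin (q : Z * Z) : Z := (d32 * fst q + d13 * snd q)%Z.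
Definition Sequiv (q q' : Z * Z) : Prop := (DD | lin q - lin q')%Z.
Definition addq (q q' : Z * Z) : Z * Z := (fst q + fst q', snd q + snd q')%Z.

Lemma Sequiv_refl q : Sequiv q q.
Proof. unfold Sequiv. rewrite Z.sub_diag. apply Z.divide_0_r. Qed.
Lemma Sequiv_sym q q' : Sequiv q q' -> Sequiv q' q.
Proof. unfold Sequiv. intros H. replace (lin q' - lin q)%Z with (-(lin q - lin q'))%Z by ring.
  apply Z.divide_opp_r. auto. Qed.
Lemma Sequiv_trans q q' q'' : Sequiv q q' -> Sequiv q' q'' -> Sequiv q q''.
Proof. unfold Sequiv. intros H H'. replace (lin q - lin q'')%Z with ((lin q - lin q') + (lin q' - lin q''))%Z by ring.
  apply Z.divide_add_r; auto. Qed.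

Lemma Mequiv_refl q : Mequiv q q.
Proof. exists 0%Z, 0%Z. lia. Qed.
Lemma Mequiv_sym q q' : Mequiv q q' -> Mequiv q' q.
Proof. intros [m [n [H1 H2]]]. exists (-m)%Z, (-n)%Z. lia. Qed.
Lemma Mequiv_trans q q' q'' : Mequiv q q' -> Mequiv q' q'' -> Mequiv q q''.
Proof. intros [m [n [H1 H2]]] [m' [n' [H3 H4]]]. exists (m+m')%Z, (n+n')%Z. lia. Qed.

Lemma lin_add q q' : lin (addq q q') = (lin q + lin q')%Z.
Proof. unfold lin, addq. simpl. ring. Qed.

Lemma M_S q q' : Mequiv q q' -> Sequiv q q'.
Proof.
  intros [m [n [H1 H2]]]. unfold Sequiv, lin. exists (a3 * m + b3 * n)%Z.
  replace (d32 * fst q + d13 * snd q - (d32 * fst q' + d13 * snd q'))%Z with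
    (d32 * (fst q - fst q') + d13 * (snd q - snd q'))%Z by ring.
  rewrite H1, H2. unfold d32, d13, DD. ring.
Qed.

Lemma Mequiv_add r q q' : Mequiv q q' -> Mequiv (addq r q) (addq r q').
Proof. intros [m [n [H1 H2]]]. exists m, n. unfold addq. simpl. lia. Qed.
Lemma Mequiv_add_inv r q q' : Mequiv (addq r q) (addq r q') -> Mequiv q q'.
Proof. intros [m [n [H1 H2]]]. exists m, n. unfold addq in *. simpl in *. lia. Qed.

Lemma z0_add r e : z0 (addq r e) = z0 r + IZR (lin e) / IZR DD.
Proof. pose proof HDR. unfold z0, addq, lin, al, be. simpl. rewrite !plus_IZR, !mult_IZR. field. auto. Qed.

Lemma z0_S r e : Sequiv e (0%Z, 0%Z) -> exists k, z0 (addq r e) = z0 r + IZR k.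
Proof.
  pose proof HDR. unfold Sequiv. intros [k Hk]. exists k. rewrite z0_add.
  assert (L0 : lin (0%Z, 0%Z) = 0%Z) by (unfold lin; simpl; ring).
  rewrite L0, Z.sub_0_r in Hk. rewrite Hk.
  rewrite mult_IZR. field. auto.
Qed.

Lemma z0_int_S r r' : isZ (z0 r) -> isZ (z0 r') -> Sequiv r r'.
Proof.
  pose proof HDR. intros [k Hk] [k' Hk']. unfold Sequiv. exists (k - k')%Z.
  apply eq_IZR. rewrite mult_IZR, (minus_IZR k k').
  assert (E : z0 r - z0 r' = IZR (lin r - lin r') / IZR DD).
  { unfold z0, lin, al, be. rewrite minus_IZR, !plus_IZR, !mult_IZR. field. auto. }
  rewrite Hk, Hk' in E. rewrite E. field. auto.
Qed.

Definition Vc (z : R) : nat :=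
  (1 + Z.to_nat (cnt (Rmin z (z + al)) (Rmax z (z + al))) +
   Z.to_nat (cnt (Rmin z (z + be)) (Rmax z (z + be))))%nat.

Lemma Rmin_sh x y c : Rmin (x + c) (y + c) = Rmin x y + c.
Proof. unfold Rmin. destruct (Rle_dec (x + c) (y + c)); destruct (Rle_dec x y); lra. Qed.
Lemma Rmax_sh x y c : Rmax (x + c) (y + c) = Rmax x y + c.
Proof. unfold Rmax. destruct (Rle_dec (x + c) (y + c)); destruct (Rle_dec x y); lra. Qed.

Lemma Vc_shift z k : Vc (z + IZR k) = Vc z.
Proof.
  unfold Vc. replace (z + IZR k + al) with ((z + al) + IZR k) by ring.
  replace (z + IZR k + be) with ((z + be) + IZR k) by ring.
  rewrite !Rmin_sh, !Rmax_sh, !cnt_shift. auto.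
Qed.

Lemma length_vlab' q : length (vlab q) = Vc (z0 q).
Proof. rewrite length_vlab. auto. Qed.

Definition Box : list (Z * Z) :=
  list_prod (Zrange 0 (Z.abs DD - 1)) (Zrange 0 (Z.abs DD - 1)).

Lemma box_complete v : exists b, In b Box /\ Mequiv v b.
Proof.
  set (A := Z.abs DD). assert (HA : (0 < A)%Z) by (unfold A; lia).
  exists ((fst v) mod A, (snd v) mod A)%Z. split.
  - unfold Box. apply in_prod; apply In_Zrange; fold A;
    pose proof (Z.mod_pos_bound (fst v) A HA); pose proof (Z.mod_pos_bound (snd v) A HA); lia.
  - assert (T1 : (DD | fst v - fst v mod A)%Z).
    { apply Z.divide_abs_l. fold A. exists (fst v / A)%Z. rewrite (Z.div_mod (fst v) A) at 1 by lia. ring. }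
    assert (T2 : (DD | snd v - snd v mod A)%Z).
    { apply Z.divide_abs_l. fold A. exists (snd v / A)%Z. rewrite (Z.div_mod (snd v) A) at 1 by lia. ring. }
    destruct T1 as [t1 E1]. destruct T2 as [t2 E2].
    exists (b2 * t1 - b1 * t2)%Z, (- a2 * t1 + a1 * t2)%Z. simpl. rewrite E1, E2. unfold DD. split; ring.
Qed.

Lemma pw_nodup {X} (R : X -> X -> Prop) L : (forall x, R x x) -> pw R L -> NoDup L.
Proof.
  induction L as [|x L IH]; simpl; intros Hr H; constructor.
  - intros Hx. destruct H as [H _]. destruct (H x Hx). auto.
  - apply IH; tauto.
Qed.

Lemma sum_map_flat {X Y} (g : Y -> nat) (F : X -> list Y) L :
  list_sum (map g (flat_map F L)) = list_sum (map (fun x => list_sum (map g (F x))) L).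
Proof. induction L as [|x L IH]; simpl; auto. rewrite map_app, list_sum_app, IH. auto. Qed.

Lemma sum_const {X} (g : X -> nat) c L : (forall x, In x L -> g x = c) -> list_sum (map g L) = (length L * c)%nat.
Proof. induction L as [|x L IH]; intros H; [simpl; auto|]. simpl. rewrite H by (simpl; auto). rewrite IH by (intros; apply H; simpl; auto). lia. Qed.

Lemma sum_mul {X} (g : X -> nat) c L : list_sum (map (fun x => c * g x)%nat L) = (c * list_sum (map g L))%nat.
Proof. induction L as [|x L IH]; simpl; auto. rewrite IH. lia. Qed.

Lemma sum_ext {X} (g h : X -> nat) L : (forall x, In x L -> g x = h x) -> list_sum (map g L) = list_sum (map h L).
Proof. intros H. f_equal. apply map_ext_in. auto. Qed.

Lemma sum_plus {X} (g h : X -> nat) L : list_sum (map (fun x => g x + h x)%nat L) = (list_sum (map g L) + list_sum (map h L))%nat.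
Proof. induction L as [|x L IH]; simpl; auto. rewrite IH. lia. Qed.

Lemma sum_zero {X} (g : X -> nat) L : (forall x, In x L -> g x = 0%nat) -> list_sum (map g L) = 0%nat.
Proof. intros H. rewrite (sum_const g 0) by auto. lia. Qed.

Lemma sum_le1 {X} (R : X -> X -> Prop) (t : X -> nat) L : (forall x, R x x) -> pw R L ->
  (forall x, (t x <= 1)%nat) -> (forall x y, t x = 1%nat -> t y = 1%nat -> R x y) ->
  (list_sum (map t L) <= 1)%nat.
Proof.
  intros Hr. induction L as [|x L IH]; [simpl; lia|]. simpl. intros [H1 H2] Ht Hxy.
  destruct (Nat.eq_dec (t x) 1) as [E|E].
  - rewrite sum_zero; [lia|]. intros y Hy. specialize (Ht y).
    destruct (Nat.eq_dec (t y) 1) as [E'|E']; [|lia]. exfalso. destruct (H1 y Hy). apply H. auto.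
  - pose proof (Ht x). pose proof (IH H2 Ht Hxy). lia.
Qed.

Lemma tau_le1 z : (tau z <= 1)%nat.
Proof. unfold tau. destruct (excluded_middle_informative (isZ z)); lia. Qed.

Lemma tau_one z : tau z = 1%nat -> isZ z.
Proof. unfold tau. destruct (excluded_middle_informative (isZ z)); auto. lia. Qed.

Theorem core_div f0 f2 : num_vertices LL f0 -> num_chambers LL f2 -> (f0 < f2)%nat ->
  Nat.divide (f2 - f0) f0.
Proof.
  intros Hv Hch Hlt.
  destruct (extract Sequiv (fun _ => True) Sequiv_refl Sequiv_sym Sequiv_trans Box) as [Rl [HR1 [HR2 HR3]]].
  destruct (extract Mequiv (fun e => Sequiv e (0%Z, 0%Z)) Mequiv_refl Mequiv_sym Mequiv_trans Box) as [El [HE1 [HE2 HE3]]].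
  set (Q := flat_map (fun r => map (addq r) El) Rl).
  assert (HQc : forall v, exists q, In q Q /\ Mequiv v q).
  { intros v. destruct (box_complete v) as [b [Hb Hvb]].
    destruct (HR3 b Hb I) as [r [Hr Hbr]].
    set (w := (fst b - fst r, snd b - snd r)%Z).
    destruct (box_complete w) as [b' [Hb' Hwb']].
    assert (Hb'S : Sequiv b' (0%Z, 0%Z)).
    { apply (Sequiv_trans _ w). apply Sequiv_sym. apply M_S; auto.
      unfold Sequiv, w, lin in *. simpl. replace (d32 * (fst b - fst r) + d13 * (snd b - snd r) - (d32 * 0 + d13 * 0))%Z
        with (d32 * fst b + d13 * snd b - (d32 * fst r + d13 * snd r))%Z by ring. auto. }
    destruct (HE3 b' Hb' Hb'S) as [e [He Hb'e]].
    exists (addq r e). split.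
    - unfold Q. apply in_flat_map. exists r. split; auto. apply in_map. auto.
    - apply (Mequiv_trans _ b); auto.
      replace b with (addq r w) by (unfold addq, w; destruct b; simpl; f_equal; ring).
      apply Mequiv_add. apply (Mequiv_trans _ b'); auto. }
  assert (HQp : pw Mequiv Q).
  { apply (pw_flat Sequiv); auto.
    - intros r _. apply pw_map; [apply (pw_nodup Mequiv); auto; apply Mequiv_refl|].
      intros e e' He He' HM. apply Mequiv_add_inv in HM. apply (pw_in_eq Mequiv El); auto.
    - intros r r' x y Hr Hr' Hx Hy HM. apply in_map_iff in Hx, Hy.
      destruct Hx as [e [<- He]]. destruct Hy as [e' [<- He']].
      apply M_S in HM. destruct (HE1 e He) as [_ S1]. destruct (HE1 e' He') as [_ S2].
      assert (L0 : lin (0%Z, 0%Z) = 0%Z) by (unfold lin; simpl; ring).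
      unfold Sequiv in *. rewrite !lin_add in HM. rewrite L0, Z.sub_0_r in S1, S2.
      replace (lin r - lin r')%Z with ((lin r + lin e - (lin r' + lin e')) - lin e + lin e')%Z by ring.
      apply Z.divide_add_r; [apply Z.divide_sub_r|]; auto. }
  destruct (core_count Q f0 f2 HQp HQc Hv Hch) as [Ef0 Ef2].
  assert (Hinv : forall r e, In e El -> Vc (z0 (addq r e)) = Vc (z0 r) /\ tau (z0 (addq r e)) = tau (z0 r)).
  { intros r e He. destruct (HE1 e He) as [_ S]. destruct (z0_S r e S) as [k Hk]. rewrite Hk.
    rewrite Vc_shift, tau_shift. auto. }
  assert (F0 : f0 = (length El * list_sum (map (fun r => Vc (z0 r)) Rl))%nat).
  { rewrite Ef0. unfold VL. rewrite length_flat_map. unfold Q. rewrite sum_map_flat.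
    rewrite <- sum_mul. apply sum_ext. intros r _. rewrite map_map.
    rewrite (sum_const _ (Vc (z0 r))); auto. intros e He. rewrite length_map, length_vlab'.
    apply Hinv; auto. }
  assert (F2 : f2 = (f0 + length El * list_sum (map (fun r => tau (z0 r)) Rl))%nat).
  { rewrite Ef2, F0. unfold CL. rewrite length_flat_map. unfold Q. rewrite sum_map_flat.
    rewrite (sum_ext _ (fun r => length El * Vc (z0 r) + length El * tau (z0 r))%nat).
    - rewrite sum_plus, !sum_mul. auto.
    - intros r _. rewrite map_map. rewrite (sum_const _ (Vc (z0 r) + tau (z0 r))%nat).
      + lia.
      + intros e He. rewrite length_map, length_chlab, length_vlab'. destruct (Hinv r e He) as [A1 A2].
        rewrite A1, A2. auto. }
  assert (S1 : (list_sum (map (fun r => tau (z0 r)) Rl) <= 1)%nat).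
  { apply (sum_le1 Sequiv); auto.
    - apply Sequiv_refl.
    - intros x. apply tau_le1.
    - intros x y Hx Hy. apply z0_int_S; apply tau_one; auto. }
  set (S := list_sum (map (fun r => tau (z0 r)) Rl)) in *.
  set (X := list_sum (map (fun r => Vc (z0 r)) Rl)) in *.
  assert (S = 1%nat).
  { destruct S as [|[|]]; auto; [|lia]. rewrite Nat.mul_0_r, Nat.add_0_r in F2. lia. }
  rewrite H in F2. exists X. lia.
Qed.
End Core.

Lemma prim a b a' b' : Z.gcd a b = 1%Z -> Z.gcd a' b' = 1%Z -> (a * b' = a' * b)%Z ->
  (a = a' /\ b = b') \/ (a = (- a')%Z /\ b = (- b')%Z).
Proof.
  intros G1 G2 E.
  assert (D1 : (a | a')%Z).
  { apply (Z.gauss a b a'); auto. exists b'. lia. }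
  assert (D2 : (a' | a)%Z).
  { apply (Z.gauss a' b' a); auto. exists b. lia. }
  assert (D3 : (b | b')%Z).
  { apply (Z.gauss b a b'). exists a'. lia. rewrite Z.gcd_comm. auto. }
  assert (D4 : (b' | b)%Z).
  { apply (Z.gauss b' a' b). exists a. lia. rewrite Z.gcd_comm. auto. }
  pose proof (Z.divide_antisym_abs _ _ D1 D2). pose proof (Z.divide_antisym_abs _ _ D3 D4).
  destruct (Z.eq_dec a 0).
  - subst. assert (a' = 0%Z) by lia. subst. lia.
  - assert (a = a' \/ a = - a')%Z as [Ea|Ea] by lia.
    + subst. left. split; auto. apply (Z.mul_reg_l _ _ a'); lia.
    + subst. right. split; auto. assert (b' = - b)%Z; [|lia].
      apply (Z.mul_reg_l _ _ (- a')); lia.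
Qed.

Lemma par_common l l' p : parallel l l' -> on_line l p -> on_line l' p -> same_tline l l'.
Proof.
  intros Hp [k Hk] [k' Hk'] q. unfold on_line.
  destruct l as [a b c], l' as [a' b' c']. unfold parallel in Hp. simpl in *.
  destruct Hp as [[-> ->]|[-> ->]]; split; intros [j Hj].
  - exists (j - k + k')%Z. rewrite !plus_IZR, minus_IZR. lra.
  - exists (j - k' + k)%Z. rewrite !plus_IZR, minus_IZR. lra.
  - exists (k + k' - j)%Z. rewrite !minus_IZR, !plus_IZR, !opp_IZR in *. lra.
  - exists (k + k' - j)%Z. rewrite !minus_IZR, !plus_IZR, !opp_IZR in *. lra.
Qed.

Lemma same_sym l l' : same_tline l l' -> same_tline l' l.
Proof. intros H p. rewrite (H p). tauto. Qed.
Lemma same_tr l l' l'' : same_tline l l' -> same_tline l' l'' -> same_tline l l''.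
Proof. intros H H' p. rewrite (H p), (H' p). tauto. Qed.

Definition covers (A A' : list tline) := forall l, In l A -> exists l', In l' A' /\ same_tline l l'.

Lemma onU_cov A A' p : covers A A' -> on_union A p -> on_union A' p.
Proof. intros Hc [l [Hl Hp]]. destruct (Hc l Hl) as [l' [Hl' Hs]]. exists l'. split; auto. apply Hs; auto. Qed.

Lemma vertex_cov A A' p : covers A A' -> is_vertex A p -> is_vertex A' p.
Proof.
  intros Hc [l1 [l2 [H1 [H2 [Hn [O1 O2]]]]]].
  destruct (Hc l1 H1) as [l1' [H1' S1]]. destruct (Hc l2 H2) as [l2' [H2' S2]].
  exists l1', l2'. repeat split; auto.
  - intros S. apply Hn. apply (same_tr _ l1'); auto. apply (same_tr _ l2'); auto. apply same_sym; auto.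
  - apply S1; auto.
  - apply S2; auto.
Qed.

Lemma chamber_cov A A' p q : covers A' A -> same_chamber A p q -> same_chamber A' p q.
Proof.
  intros Hc [Hp [Hq [g1 [g2 [C1 [C2 [E1 [E2 [Et Hav]]]]]]]]].
  split; [intros H; apply Hp; eapply onU_cov; eauto|].
  split; [intros H; apply Hq; eapply onU_cov; eauto|].
  exists g1, g2. repeat split; auto. intros t Ht H. apply (Hav t Ht). eapply onU_cov; eauto.
Qed.

Lemma num_cov A A' f : covers A A' -> covers A' A ->
  (num_vertices A f -> num_vertices A' f) /\ (num_chambers A f -> num_chambers A' f).
Proof.
  intros H1 H2. split; intros H.
  - apply (num_classes_ext (is_vertex A) _ torus_eq); auto; [|tauto].
    intros p. split; apply vertex_cov; auto.
  - apply (num_classes_ext (fun p => ~ on_union A p) _ (same_chamber A)); auto.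
    + intros p. split; intros Hn Ho; apply Hn; eapply onU_cov; eauto.
    + intros p q. split; apply chamber_cov; auto.
Qed.

Lemma cov_incl A A' : (forall l, In l A -> In l A') -> covers A A'.
Proof. intros H l Hl. exists l. split; auto. intros p; tauto. Qed.

Lemma core3' (P Q R : tline) f0 f2 :
  valid_line P -> valid_line Q -> valid_line R ->
  ~ same_tline P Q -> ~ same_tline P R -> ~ same_tline Q R -> ~ parallel P Q ->
  ((ta R * tb Q - tb R * ta Q) * (ta P * tb R - tb P * ta R) <= 0)%Z ->
  num_vertices (P :: Q :: R :: nil) f0 -> num_chambers (P :: Q :: R :: nil) f2 -> (f0 < f2)%nat ->
  Nat.divide (f2 - f0) f0.
Proof.
  destruct P as [a1 b1 c1], Q as [a2 b2 c2], R as [a3 b3 c3]. unfold valid_line. simpl.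
  intros V1 V2 V3 S12 S13 S23 NP Hprod Hv Hc Hlt.
  apply (core_div a1 b1 a2 b2 a3 b3 c1 c2 c3); auto.
  - unfold DD. intros E. apply NP. unfold parallel. simpl. apply prim; auto. lia.
  - intros [-> ->]. rewrite Z.gcd_0_l in V3. simpl in V3. discriminate.
  - unfold d13. intros E p H1 H3. apply S13. apply (par_common _ _ p).
    + unfold parallel. simpl. apply prim; auto. lia.
    + apply on1. auto.
    + apply on3. auto.
  - unfold d32. intros E p H2 H3. apply S23. apply (par_common _ _ p).
    + unfold parallel. simpl. apply prim; auto. lia.
    + apply on2. auto.
    + apply on3. auto.
Qed.

Lemma core3 (P Q R : tline) f0 f2 :
  valid_line P -> valid_line Q -> valid_line R ->
  ~ same_tline P Q -> ~ same_tline P R -> ~ same_tline Q R -> ~ parallel P Q ->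
  num_vertices (P :: Q :: R :: nil) f0 -> num_chambers (P :: Q :: R :: nil) f2 -> (f0 < f2)%nat ->
  Nat.divide (f2 - f0) f0.
Proof.
  intros V1 V2 V3 S12 S13 S23 NP Hv Hc Hlt.
  destruct (Z_le_gt_dec ((ta R * tb Q - tb R * ta Q) * (ta P * tb R - tb P * ta R)) 0) as [Hp|Hp].
  - apply (core3' P Q R); auto.
  - set (Q' := mkTline (- ta Q) (- tb Q) (- tc Q)).
    assert (SQ : same_tline Q Q').
    { intros p. unfold on_line, Q'. simpl. split; intros [k Hk]; exists (- k)%Z; rewrite !opp_IZR in *; lra. }
    assert (Cv1 : covers (P :: Q :: R :: nil) (P :: Q' :: R :: nil)).
    { intros l [<-|[<-|[<-|[]]]].
      - exists P. simpl. split; auto. intros p; tauto.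
      - exists Q'. simpl. auto.
      - exists R. simpl. split; auto. intros p; tauto. }
    assert (Cv2 : covers (P :: Q' :: R :: nil) (P :: Q :: R :: nil)).
    { intros l [<-|[<-|[<-|[]]]].
      - exists P. simpl. split; auto. intros p; tauto.
      - exists Q. simpl. split; auto. apply same_sym; auto.
      - exists R. simpl. split; auto. intros p; tauto. }
    apply (core3' P Q' R); auto.
    + unfold valid_line, Q' in *. simpl. rewrite Z.gcd_opp_l, Z.gcd_opp_r. auto.
    + intros H. apply S12. apply (same_tr _ Q'); auto. apply same_sym; auto.
    + intros H. apply S23. apply (same_tr _ Q'); auto.
    + intros H. apply NP. unfold parallel, Q' in *. simpl in H. lia.
    + unfold Q'. simpl. nia.
    + apply (num_cov _ _ _ Cv1 Cv2); auto.
    + apply (num_cov _ _ _ Cv1 Cv2); auto.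
Qed.

Close Scope R_scope.

Theorem mainTheorem9 (A : list tline) (f0 f2 : nat) :
  toric_arrangement A -> length A = 3%nat ->
  num_vertices A f0 -> num_chambers A f2 ->
  (f0 < f2)%nat -> (f2 < 2 * f0)%nat ->
  Nat.divide (f2 - f0) f0.
Proof.
  intros [Hval [Hdist [l1 [l2 [H1 [H2 NP]]]]]] Hlen Hv Hc Hlt _.
  destruct A as [|x [|y [|z [|w A]]]]; simpl in Hlen; try discriminate.
  inversion Hval as [|? ? Vx Hval1]; subst. inversion Hval1 as [|? ? Vy Hval2]; subst.
  inversion Hval2 as [|? ? Vz _]; subst.
  assert (Sxy : ~ same_tline x y) by (apply (Hdist 0 1)%nat; simpl; lia).
  assert (Sxz : ~ same_tline x z) by (apply (Hdist 0 2)%nat; simpl; lia).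
  assert (Syz : ~ same_tline y z) by (apply (Hdist 1 2)%nat; simpl; lia).
  assert (Syx : ~ same_tline y x) by (intros H; apply Sxy; apply same_sym; auto).
  assert (Szx : ~ same_tline z x) by (intros H; apply Sxz; apply same_sym; auto).
  assert (Szy : ~ same_tline z y) by (intros H; apply Syz; apply same_sym; auto).
  assert (Hpr : forall l, parallel l l) by (intros l; left; auto).
  assert (Gen : forall P Q R, valid_line P -> valid_line Q -> valid_line R ->
     ~ same_tline P Q -> ~ same_tline P R -> ~ same_tline Q R -> ~ parallel P Q ->
     (forall l, In l (x :: y :: z :: nil) <-> In l (P :: Q :: R :: nil)) -> Nat.divide (f2 - f0) f0).
  { intros P Q R VP VQ VR SPQ SPR SQR NPQ Hin.
    assert (C1 : covers (x :: y :: z :: nil) (P :: Q :: R :: nil)) by (apply cov_incl; intros l; apply Hin).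
    assert (C2 : covers (P :: Q :: R :: nil) (x :: y :: z :: nil)) by (apply cov_incl; intros l; apply Hin).
    apply (core3 P Q R); auto; apply (num_cov _ _ _ C1 C2); auto. }
  simpl in H1, H2.
  destruct H1 as [<-|[<-|[<-|[]]]]; destruct H2 as [<-|[<-|[<-|[]]]];
  try (exfalso; apply NP; apply Hpr).
  - apply (Gen x y z); auto. simpl. tauto.
  - apply (Gen x z y); auto. simpl. tauto.
  - apply (Gen y x z); auto. simpl. tauto.
  - apply (Gen y z x); auto. simpl. tauto.
  - apply (Gen z x y); auto. simpl. tauto.
  - apply (Gen z y x); auto. simpl. tauto.
Qed.
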